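(* Let $m_1,\dots,m_r,n$ be positive integers with $m=\sum_{i=1}^r m_i\le n$, and suppose that $\sum_{i=1}^r\lfloor m_i n/(m+1)\rfloor\ge\lfloor mn/(m+1)\rfloor$ and $m_i n/(m+1)\ge\lceil m_i n/(m+2)\rceil$ for all $i\in[r]$. Let $h$ be the least integer $t\ge m+2$ such that either there is some $i\in[r]$ with $\frac{m_i n}{t}<\big\lceil \frac{m_i n}{t+1}\big\rceil$, or there are indices $i\ne j$ such that $t$ divides neither $m_i n$ nor $m_j n$. Then $K_{m_1 n,\dots,m_r n}$ is equitably $k$-colorable for every integer $k$ with $\sum_{i=1}^r\lceil m_i n/h\rceil\le k\le\lceil mn/(m+1)\rceil-1$.
   Context: A (proper) $k$-coloring of a graph $G$ is a map $f:V(G)\to\{1,\dots,k\}$ with $f(x)\ne f(y)$ whenever $xy\in E(G)$; an equitable $k$-coloring is a $k$-coloring in which any two color classes differ in size by at most $1$; $G$ is equitably $k$-colorable if it has one. $K_{a_1,\dots,a_r}$ denotes the complete multipartite graph with parts of sizes $a_1,\dots,a_r$. $[r]=\{1,\dots,r\}$. *)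

(* Defs.v *)
From mathcomp Require Import all_boot.
Set Implicit Arguments. Unset Strict Implicit. Unset Printing Implicit Defensive.

Definition ceil_div (a b : nat) : nat := (a + b.-1) %/ b.

Definition proper_coloring (T : finType) (e : rel T) (k : nat) (f : T -> 'I_k) :=
  forall x y : T, e x y -> f x != f y.

Definition equitable_coloring (T : finType) (k : nat) (f : T -> 'I_k) :=
  forall c c' : 'I_k, #|[pred x | f x == c]| <= #|[pred x | f x == c']|.+1.

Definition equitably_colorable (T : finType) (e : rel T) (k : nat) :=
  exists f : T -> 'I_k, proper_coloring e f /\ equitable_coloring f.

(* complete multipartite graph K_{a_1,...,a_r}: vertices are pairs (i, v)
   with v in part i (of size a i); two vertices adjacent iff in different parts *)
Definition cmp_vertex (r : nat) (a : 'I_r -> nat) : finType := {i : 'I_r & 'I_(a i)}.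
Definition cmp_adj (r : nat) (a : 'I_r -> nat) : rel (cmp_vertex a) :=
  fun x y => tag x != tag y.

Definition h_prop (r : nat) (mm : 'I_r -> nat) (n t : nat) : Prop :=
  (exists i : 'I_r, mm i * n < t * ceil_div (mm i * n) t.+1) \/
  (exists i j : 'I_r, i != j /\ ~~ (t %| mm i * n) /\ ~~ (t %| mm j * n)).

(* Main.v *)
Require Import Defs.
From mathcomp Require Import all_boot.
From mathcomp Require Import zify.


Lemma ceil_divP a b : 0 < b -> a <= ceil_div a b * b /\ ceil_div a b * b < a + b.
Proof.
move=> hb; rewrite /ceil_div.
have h1 := leq_divM (a + b.-1) b.
have h2 := ltn_ceil (a + b.-1) hb.
set q := (a + b.-1) %/ b in h1 h2 *.
split; nia.
Qed.

Lemma ceil_le_floor1 a b : 0 < b -> ceil_div a b <= a %/ b + 1.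
Proof.
move=> hb; have [h1 h2] := ceil_divP a b hb.
have h3 := ltn_ceil a hb.
set c := ceil_div a b in h1 h2 *. set q := a %/ b in h3 *.
nia.
Qed.

Lemma ceil_div_dvd a b : 0 < b -> b %| a -> ceil_div a b = a %/ b.
Proof.
move=> hb hd; have [h1 h2] := ceil_divP a b hb.
have h3 := divnK hd.
set c := ceil_div a b in h1 h2 *. set q := a %/ b in h3 *.
nia.
Qed.

Lemma distrib (l u : nat -> nat) r k :
  (forall j, j < r -> l j <= u j) ->
  \sum_(0 <= j < r) l j <= k -> k <= \sum_(0 <= j < r) u j ->
  exists kk : nat -> nat, (forall j, j < r -> l j <= kk j <= u j) /\
     \sum_(0 <= j < r) kk j = k.
Proof.
elim: r k => [|r IH] k H Hk1 Hk2.
  exists (fun _ => 0); split; first by [].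
  rewrite big_geq // in Hk2 *; rewrite big_geq //; lia.
rewrite !big_nat_recr //= in Hk1 Hk2.
have leS : \sum_(0 <= j < r) l j <= \sum_(0 <= j < r) u j.
  rewrite big_nat_cond [X in _ <= X]big_nat_cond.
  apply: leq_sum => j /andP [/andP [_ hj] _]; apply: H; exact: ltn_trans hj (ltnSn r).
have Hr := H r (ltnSn r).
set Sl := \sum_(0 <= j < r) l j in Hk1 leS.
set Su := \sum_(0 <= j < r) u j in Hk2 leS.
pose x := maxn (l r) (k - Su).
have [kk [Hkk Hs]] : exists kk : nat -> nat, (forall j, j < r -> l j <= kk j <= u j) /\
     \sum_(0 <= j < r) kk j = k - x.
  apply: IH.
  - by move=> j hj; apply: H; apply: (ltn_trans hj).
  - rewrite /x; lia.
  - rewrite /x; lia.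
exists (fun j => if j == r then x else kk j); split.
  move=> j; rewrite ltnS leq_eqVlt => /orP [/eqP ->|hj].
    by rewrite eqxx /x; lia.
  by rewrite (ltn_eqF hj); apply: Hkk.
rewrite big_nat_recr //= eqxx.
rewrite (eq_big_nat _ _ (F2 := kk)); last first.
  by move=> i /andP [_ hi]; rewrite (ltn_eqF hi).
rewrite Hs /x; lia.
Qed.

Lemma count_mod (A q d s : nat) : 0 < s -> d < q -> s * q <= A <= s.+1 * q ->
  s <= #|[pred v : 'I_A | v %% q == d]| <= s.+1.
Proof.
move=> hs hd /andP [h1 h2].
have hq : 0 < q by apply: leq_ltn_trans hd.
case: A h1 h2 => [|A] h1 h2; first by nia.
apply/andP; split.
- pose g := fun w : 'I_s => (inord (w * q + d) : 'I_A.+1).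
  have gv : forall w : 'I_s, (g w : nat) = w * q + d.
    move=> w; rewrite /g inordK //; have := ltn_ord w; nia.
  have ginj : injective g.
    move=> w1 w2 /(congr1 (@nat_of_ord _)); rewrite !gv => e; apply: val_inj => /=.
    have : w1 * q = w2 * q by lia.
    by move/eqP; rewrite eqn_pmul2r // => /eqP.
  rewrite -[X in X <= _](card_ord s) -cardsT -(card_imset _ ginj).
  apply: subset_leq_card; apply/subsetP => x /imsetP [w _ ->].
  rewrite inE /= gv; apply/eqP.
  by rewrite modnMDl modn_small.
- pose h := fun v : 'I_A.+1 => (inord (v %/ q) : 'I_s.+1).
  have hv : forall v : 'I_A.+1, (h v : nat) = v %/ q.
    move=> v; rewrite /h inordK //; rewrite ltn_divLR //; have := ltn_ord v; nia.
  have hinj : {in [pred v : 'I_A.+1 | v %% q == d] &, injective h}.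
    move=> v1 v2; rewrite !inE => /eqP e1 /eqP e2 /(congr1 (@nat_of_ord _)); rewrite !hv => e.
    apply: val_inj => /=; rewrite (divn_eq v1 q) (divn_eq v2 q) e e1 e2 //.
  rewrite -(card_in_imset hinj).
  by rewrite -[X in _ <= X](card_ord s.+1); apply: max_card.
Qed.

Lemma K_mono (kk : nat -> nat) i j : i <= j ->
  \sum_(0 <= l < i) kk l <= \sum_(0 <= l < j) kk l.
Proof. by move=> hij; rewrite (@big_cat_nat _ _ _ i 0 j) //= leq_addr. Qed.

Lemma K_cover (kk : nat -> nat) r c : c < \sum_(0 <= l < r) kk l ->
  exists2 j, j < r & \sum_(0 <= l < j) kk l <= c < \sum_(0 <= l < j.+1) kk l.
Proof.
elim: r => [|r IH]; first by rewrite big_geq.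
case: (ltnP c (\sum_(0 <= l < r) kk l)) => hc hc'.
  by have [j hj hj2] := IH hc; exists j => //; apply: ltn_trans hj _.
by exists r => //; apply/andP.
Qed.

Lemma construct r (a : 'I_r -> nat) (kk : nat -> nat) s k :
  0 < r -> (forall i, 0 < a i) -> 0 < s ->
  (forall i : 'I_r, s * kk i <= a i <= s.+1 * kk i) ->
  \sum_(0 <= j < r) kk j = k ->
  equitably_colorable (@cmp_adj r a) k.
Proof.
move=> hr ha hs hkk.
pose K := fun j => \sum_(0 <= l < j) kk l.
have KS : forall j, K j.+1 = K j + kk j by move=> j; rewrite /K big_nat_recr.
have Km : forall i j, i <= j -> K i <= K j by move=> i j; apply: K_mono.
have Kuniq : forall i j c, K i <= c < K i.+1 -> K j <= c < K j.+1 -> i = j.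
  move=> i j c h1 h2; case: (ltngtP i j) => // hij.
    by have := Km _ _ hij; lia.
  by have := Km _ _ hij; lia.
case: k => [|k] hsum.
  have := hkk (Ordinal hr); have := ha (Ordinal hr) => /=.
  have := Km 1 r hr; rewrite /K hsum big_nat1; lia.
have Kr : K r = k.+1 by [].
pose f := fun x : cmp_vertex a => (inord (K (tag x) + tagged x %% kk (tag x)) : 'I_k.+1).
have fval : forall x, (f x : nat) = K (tag x) + tagged x %% kk (tag x) /\
    K (tag x) <= f x < K (tag x).+1.
  case=> i v /=.
  have hv := ltn_ord v. have := hkk i.
  move=> hki; have hk : 0 < kk i by nia.
  have hm := ltn_pmod v hk.
  have : K i.+1 <= K r by apply: Km.
  rewrite KS => hKr.
  rewrite /f /= inordK; last by lia.
  split => //; lia.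
exists f; split.
  move=> x y; rewrite /cmp_adj => hne; apply/negP => /eqP hxy.
  have [_ hx] := fval x; have [_ hy] := fval y.
  rewrite hxy in hx.
  have := Kuniq _ _ _ hx hy => /val_inj e.
  by rewrite e eqxx in hne.
suff H : forall c, s <= #|[pred x | f x == c]| <= s.+1.
  by move=> c c'; have := H c; have := H c'; lia.
move=> c.
have hc : c < K r by rewrite Kr.
have [j hj hcj] := @K_cover kk r c hc.
pose i0 := Ordinal hj.
pose d := c - K j.
have hd : d < kk j by rewrite /d; move: hcj; rewrite -/(K j) -/(K j.+1) KS; lia.
have -> : #|[pred x | f x == c]| = #|[pred v : 'I_(a i0) | v %% kk j == d]|.
  have tinj : injective (Tagged (fun i => 'I_(a i)) (i:=i0)).
    by move=> v1 v2 e; apply: eq_from_Tagged e.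
  rewrite -(card_imset _ tinj); apply: eq_card => x; rewrite inE.
  case: x => i v.
  apply/eqP/imsetP.
    move=> hfc; have [fv fb] := fval (existT _ i v).
    rewrite hfc /= in fb.
    have e : i = i0 by apply: val_inj => /=; apply: (Kuniq _ _ (val c)).
    subst i; exists v => //.
    rewrite inE; apply/eqP; rewrite /d -hfc fv /=; lia.
  case=> v' hv' heq.
  have hi := congr1 tag heq; simpl in hi; subst i.
  have ev := eq_from_Tagged heq; subst v.
  apply: val_inj; have [fv _] := fval (existT _ i0 v').
  rewrite /= fv /=; move: hv'; rewrite inE => /eqP ->.
  rewrite /d; move: hcj; rewrite -/(K j); lia.
apply: count_mod => //.
exact: hkk i0.
Qed.

Theorem mainTheorem6 (r : nat) (mm : 'I_r -> nat) (n : nat)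
  (hr : 0 < r) (hmpos : forall i, 0 < mm i) (hn : 0 < n)
  (hmn : \sum_(i < r) mm i <= n)
  (hfloor : \sum_(i < r) (mm i * n %/ (\sum_(j < r) mm j).+1)
              >= (\sum_(j < r) mm j) * n %/ (\sum_(j < r) mm j).+1)
  (hceil : forall i, (\sum_(j < r) mm j).+1 * ceil_div (mm i * n) (\sum_(j < r) mm j).+2
              <= mm i * n)
  (h : nat)
  (hge : (\sum_(j < r) mm j).+2 <= h)
  (hP : h_prop mm n h)
  (hmin : forall t, (\sum_(j < r) mm j).+2 <= t -> t < h -> ~ h_prop mm n t) :
  forall k : nat,
    \sum_(i < r) ceil_div (mm i * n) h <= k ->
    k < ceil_div ((\sum_(j < r) mm j) * n) (\sum_(j < r) mm j).+1 ->
    equitably_colorable (@cmp_adj r (fun i => mm i * n)) k.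
Proof.
move=> k hk1 hk2.
set M := \sum_(j < r) mm j in hfloor hceil hge hmin hmn hk2.
pose U := fun s => \sum_(i < r) (mm i * n) %/ s.
pose L := fun s => \sum_(i < r) ceil_div (mm i * n) s.+1.
have hpos : forall i, 0 < mm i * n by move=> i; rewrite muln_gt0 hmpos hn.
have perI : forall s, M.+1 <= s -> s < h -> forall i,
    ceil_div (mm i * n) s.+1 <= mm i * n %/ s.
  move=> s hs1 hs2 i; rewrite leq_divRL; last by apply: leq_trans hs1.
  case: (ltngtP s M.+1) => hsM; first by lia.
    have nP := hmin s hsM hs2.
    rewrite mulnC leqNgt; apply/negP => hlt; apply: nP; left; by exists i.
  by rewrite hsM mulnC; exact: hceil i.
have F2 : forall t, M.+2 <= t -> t < h ->
    \sum_(i < r) ceil_div (mm i * n) t <= U t + 1.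
  move=> t ht1 ht2; have nP := hmin t ht1 ht2.
  have ht : 0 < t by lia.
  case: (boolP [exists i, ~~ (t %| mm i * n)]).
    case/existsP => i0 hi0.
    rewrite /U (bigD1 i0) //= [X in _ <= X + 1](bigD1 i0) //=.
    rewrite (eq_bigr (fun i => mm i * n %/ t)); last first.
      move=> j /= hj; apply: ceil_div_dvd => //.
      apply/negPn/negP => hnd; apply: nP; right; exists i0, j; split => //.
      by rewrite eq_sym.
    have := ceil_le_floor1 (mm i0 * n) t ht; lia.
  rewrite negb_exists => /forallP hall.
  rewrite /U (eq_bigr (fun i => mm i * n %/ t)) ?leq_addr // => i _.
  by apply: ceil_div_dvd => //; have := hall i; rewrite negbK.
have F1 : k <= U M.+1.
  have := ceil_le_floor1 (M * n) M.+1 (ltn0Sn M); move: hfloor; rewrite /U; lia.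
have search : forall d s, s + d = h.-1 -> M.+1 <= s -> k <= U s ->
    exists s, [/\ M.+1 <= s, s < h, L s <= k & k <= U s].
  elim=> [|d IH] s hsd hs hks.
    exists s; split => //; try lia.
    by rewrite /L; have -> : s.+1 = h by lia.
  case: (leqP k (U s.+1)) => hk.
    by apply: (IH s.+1) => //; lia.
  exists s; split => //; try lia.
  have := F2 s.+1 ltac:(lia) ltac:(lia); rewrite /L; lia.
have [s [hs1 hs2 hLs hUs]] := search (h.-1 - M.+1) M.+1 ltac:(lia) (leqnn _) F1.
pose ofn := fun j : nat => insubd (Ordinal hr) j : 'I_r.
have ofnK : forall i : 'I_r, ofn (val i) = i.
  by move=> i; apply: val_inj; rewrite /ofn val_insubd ltn_ord.
have sumK : forall F : 'I_r -> nat, \sum_(0 <= j < r) F (ofn j) = \sum_(i < r) F i.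
  by move=> F; rewrite big_mkord; apply: eq_bigr => i _; rewrite ofnK.
have [kk [hkk hsum]] := @distrib (fun j => ceil_div (mm (ofn j) * n) s.+1)
     (fun j => mm (ofn j) * n %/ s) r k
     (fun j _ => perI s hs1 hs2 (ofn j))
     ltac:(by rewrite (sumK (fun i => ceil_div (mm i * n) s.+1)))
     ltac:(by rewrite (sumK (fun i => mm i * n %/ s))).
have hs : 0 < s by apply: leq_trans hs1.
apply: (@construct r (fun i => mm i * n) kk s k hr hpos hs _ hsum).
move=> i; have := hkk i (ltn_ord i); rewrite /= ofnK => /andP [h1 h2].
move: h2; rewrite leq_divRL // => h2.
have [h3 _] := ceil_divP (mm i * n) s.+1 (ltn0Sn s).
move: h1 h3; set c := ceil_div _ _ => h1 h3.
apply/andP; split; nia.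
Qed.
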